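(* Let $$A= \begin{pmatrix} 1& -2& 2\\ 2&-1& 2\\ 2&-2& 3 \end{pmatrix},\quad B= \begin{pmatrix} 1& 2& 2\\ 2&1& 2\\ 2&2& 3 \end{pmatrix},\quad C= \begin{pmatrix} -1& 2& 2\\ -2&1& 2\\ -2&2& 3 \end{pmatrix},$$ and let $P=(x,y,z)$ be a primitive Pythagorean triple. Then the points of $\mathbb{R}^3$ with coordinates $AP^\top$, $BP^\top$, $CP^\top$ are the vertices of a triangle of area $2xy\sqrt{17}$.
   Context: A primitive Pythagorean triple is a triple $(x,y,z)$ of positive integers with $x^2+y^2=z^2$, $\gcd(x,y)=1$ and $x$ odd. Triples are regarded as row vectors and $\top$ denotes transpose; $\mathbb{R}^3$ carries the Euclidean metric. *)

(* Defs.v *)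
From HB Require Import structures.
From mathcomp Require Import all_boot all_order all_algebra.
From mathcomp Require Import reals.
Set Implicit Arguments. Unset Strict Implicit. Unset Printing Implicit Defensive.
Import Order.TTheory GRing.Theory Num.Theory.
Local Open Scope ring_scope.

Definition prim_pyth (x y z : nat) : Prop :=
  [/\ (0 < x)%N, (0 < y)%N, (0 < z)%N, (x ^ 2 + y ^ 2 = z ^ 2)%N
      & coprime x y /\ odd x].

Definition mx3 (R : realType) (a : seq (seq int)) : 'M[R]_3 :=
  \matrix_(i < 3, j < 3) ((nth [::] a i)`_j)%:~R.

Definition matA (R : realType) : 'M[R]_3 :=
  mx3 R [:: [:: 1; -2; 2]; [:: 2; -1; 2]; [:: 2; -2; 3]].
Definition matB (R : realType) : 'M[R]_3 :=
  mx3 R [:: [:: 1; 2; 2]; [:: 2; 1; 2]; [:: 2; 2; 3]].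
Definition matC (R : realType) : 'M[R]_3 :=
  mx3 R [:: [:: -1; 2; 2]; [:: -2; 1; 2]; [:: -2; 2; 3]].

Definition ptcol (R : realType) (x y z : nat) : 'cV[R]_3 :=
  \col_(i < 3) ([:: x%:R; y%:R; z%:R]`_i).

Definition cross (R : realType) (u v : 'cV[R]_3) : 'cV[R]_3 :=
  \col_(i < 3)
    [:: u 1 0 * v 2 0 - u 2 0 * v 1 0;
        u 2 0 * v 0 0 - u 0 0 * v 2 0;
        u 0 0 * v 1 0 - u 1 0 * v 0 0]`_i.

Definition enorm (R : realType) (u : 'cV[R]_3) : R :=
  Num.sqrt (\sum_(i < 3) u i 0 ^+ 2).

(* three points are the vertices of a (non-degenerate) triangle iff they
   are not collinear *)
Definition is_triangle (R : realType) (p q r : 'cV[R]_3) : Prop :=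
  cross (q - p) (r - p) != 0.

Definition tri_area (R : realType) (p q r : 'cV[R]_3) : R :=
  enorm (cross (q - p) (r - p)) / 2.

Arguments mx3 R a : clear implicits.
Arguments matA R : clear implicits.
Arguments matB R : clear implicits.
Arguments matC R : clear implicits.
Arguments ptcol R x y z : clear implicits.

(* Main.v *)
Require Import Defs.
From HB Require Import structures.
From mathcomp Require Import all_boot all_order all_algebra.
From mathcomp Require Import reals.
From mathcomp Require Import ring lra.
Import Order.TTheory GRing.Theory Num.Theory.
Local Open Scope ring_scope.

Lemma crossE (R : realType) (x y z : nat) :
  cross (matB R *m ptcol R x y z - matA R *m ptcol R x y z)
        (matC R *m ptcol R x y z - matA R *m ptcol R x y z)
  = \col_(i < 3) [:: 8 * (x%:R * y%:R); 8 * (x%:R * y%:R); -12 * (x%:R * y%:R)]`_i :> 'cV[R]_3.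
Proof.
apply/matrixP=> i j; rewrite !mxE.
rewrite /matA /matB /matC /mx3 /ptcol !big_ord_recl !big_ord0 !mxE /=.
case: i => [[|[|[|]]]] //= _.
all: rewrite /bump /=; ring.
Qed.

Theorem mainTheorem12 (R : realType) (x y z : nat) :
  prim_pyth x y z ->
  is_triangle (matA R *m ptcol R x y z) (matB R *m ptcol R x y z)
              (matC R *m ptcol R x y z) /\
  tri_area (matA R *m ptcol R x y z) (matB R *m ptcol R x y z)
           (matC R *m ptcol R x y z)
    = 2 * x%:R * y%:R * Num.sqrt 17.
Proof.
case=> x0 y0 _ _ _.
have hxy : 0 < (x%:R * y%:R : R) by rewrite mulr_gt0 // ltr0n.
rewrite /is_triangle /tri_area crossE; split.
  apply/eqP => H; have := congr1 (fun M : 'cV[R]_3 => M ord0 ord0) H; rewrite !mxE /= => /eqP.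
  by rewrite mulf_eq0 (gt_eqF hxy) orbF pnatr_eq0.
rewrite /enorm !big_ord_recl big_ord0 !mxE /= /bump /=.
have -> : (8 * (x%:R * y%:R)) ^+ 2 + ((8 * (x%:R * y%:R)) ^+ 2 + ((-12 * (x%:R * y%:R)) ^+ 2 + 0))
   = (4 * (x%:R * y%:R)) ^+ 2 * 17 :> R by ring.
rewrite sqrtrM ?sqr_ge0 // sqrtr_sqr ger0_norm; last by rewrite mulr_ge0 // ltW.
by field.
Qed.
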